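(* Let $G$ be a graph with $m=|E(G)|$ edges, and let $(G',L,\alpha,\beta)$ be constructed from $G$ as described in the context. If $G$ is 3-colorable, then there exists an $L$-recoloring sequence for $G'$ from $\alpha$ to $\beta$ of length at most $c\cdot(m+1)$, where $c$ is an absolute constant.
   Context: A color list assignment $L$ gives each vertex a list $L(v)\subseteq[4]=\{1,2,3,4\}$. An $L$-coloring is a proper coloring $\gamma$ with $\gamma(v)\in L(v)$ for all $v$. $\mathcal{C}(G,L)$ is the graph on $L$-colorings, two adjacent iff they differ on exactly one vertex; an $L$-recoloring sequence of length $m$ is a sequence $\gamma_0,\ldots,\gamma_m$ of $L$-colorings with consecutive ones equal or adjacent in $\mathcal{C}(G,L)$. $(a,b)$-forbidding path: for $a,b\in[4]$, a path $P$ with lists $L(x)\subseteq[4]$ and end vertices $u,v$ is $(a,b)$-forbidding from $u$ to $v$ if (i) for all $x\in L(u)$, $y\in L(v)$, there is an $L$-coloring $\gamma$ of $P$ with $\gamma(u)=x,\gamma(v)=y$ iff $x\ne a$ or $y\ne b$ (such $(x,y)$ are called admissible); and (ii) for any $L$-coloring $\gamma$ of $P$ and any admissible $(x,y)$ with $x=\gamma(u)$ or $y=\gamma(v)$, there is an $L$-recoloring sequence of $P$ from $\gamma$ to an $L$-coloring $\delta$ with $\delta(u)=x,\delta(v)=y$ in which each internal vertex is recolored at most once and $u,v$ are not recolored until the last step. Such paths of length six exist whenever $L(u),L(v)\ne[4]$, $a\in L(u)$, $b\in L(v)$. Construction of $G'$: start with $V(G)$ (no edges among these), each $u\in V(G)$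 with $L(u)=\{1,2,3\}$, $\alpha(u)=1$. For every edge $uv\in E(G)$ (with a fixed orientation $u,v$), add new vertices $x_{uv},y_{uv},z_{uv}$ with $\alpha$-value $4$ each and $L(x_{uv})=\{1,2,4\}$, $L(y_{uv})=\{3,4\}$, $L(z_{uv})=\{1,2,4\}$; add edges $ux_{uv}$, $uy_{uv}$; and add (each with its own new internal vertices, each of length six) a $(1,2)$-forbidding and a $(3,1)$-forbidding path from $u$ to $x_{uv}$, a $(2,3)$-forbidding path from $u$ to $y_{uv}$, a $(2,1)$-forbidding and a $(3,2)$-forbidding path from $v$ to $x_{uv}$, a $(1,3)$-forbidding path from $v$ to $y_{uv}$, a $(4,1)$-forbidding path from $x_{uv}$ to $z_{uv}$, and a $(4,2)$-forbidding path from $y_{uv}$ to $z_{uv}$. Let $Z=\{z_{uv}\mid uv\in E(G)\}$. Add vertices $a,b,c,d$ with $\alpha(a)=1,\alpha(b)=2,\alpha(c)=3,\alpha(d)=4$, $L(a)=\{1,2,3\}$, $L(b)=\{1,2\}$, $L(c)=\{3,4\}$, $L(d)=\{4\}$, all edges among $a,b,c,d$ except $cd$, and edges from every vertex of $Z$ to $c$. Extend $\alpha$ arbitrarily to an $L$-coloring of all internal vertices of the forbidding paths (possible since the end colors are admissible). Set $\beta(w)=\alpha(w)$ for all $w\ne a,b$, $\beta(a)=2$, $\beta(b)=1$. *)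

(* Defs.v *)
From mathcomp Require Import all_boot.
Set Implicit Arguments.
Unset Strict Implicit.
Unset Printing Implicit Defensive.

(* Colors are natural numbers; lists are sequences of naturals (subsets of [4]). *)

Definition is_Lcol (V : Type) (adj : V -> V -> Prop) (L : V -> seq nat)
  (g : V -> nat) : Prop :=
  (forall x, g x \in L x) /\ (forall x y, adj x y -> g x <> g y).

Definition step_ok (V : Type) (f g : V -> nat) : Prop :=
  (forall x, f x = g x) \/
  (exists w, f w <> g w /\ forall x, x <> w -> f x = g x).

Definition recol_seq (V : Type) (adj : V -> V -> Prop) (L : V -> seq nat)
  (s : nat -> V -> nat) (m : nat) : Prop :=
  (forall i, i <= m -> is_Lcol adj L (s i)) /\
  (forall i, i < m -> step_ok (s i) (s i.+1)).

Definition padj (i j : 'I_7) : Prop :=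
  nat_of_ord j = (nat_of_ord i).+1 \/ nat_of_ord i = (nat_of_ord j).+1.

Definition pu : 'I_7 := ord0.
Definition pv : 'I_7 := ord_max.

Definition forbidding (Lp : 'I_7 -> seq nat) (a b : nat) : Prop :=
  (forall x y, x \in Lp pu -> y \in Lp pv ->
     ((exists g, is_Lcol padj Lp g /\ g pu = x /\ g pv = y) <-> (x <> a \/ y <> b)))
  /\
  (forall (g : 'I_7 -> nat) (x y : nat),
     is_Lcol padj Lp g -> x \in Lp pu -> y \in Lp pv -> (x <> a \/ y <> b) ->
     (x = g pu \/ y = g pv) ->
     exists (m : nat) (s : nat -> 'I_7 -> nat),
       [/\ recol_seq padj Lp s m,
           (forall w, s 0 w = g w),
           s m pu = x /\ s m pv = y,
           (forall i, i < m -> s i pu = g pu /\ s i pv = g pv) &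
           (forall w : 'I_7, w <> pu -> w <> pv ->
              forall i j, i < j -> j < m ->
                s i w <> s i.+1 w -> s j w <> s j.+1 w -> False)]).

(* A simple graph on 'I_n together with a fixed orientation o of its edges:
   uv is an edge of G iff o u v || o v u. *)
Definition edge_t (n : nat) (o : rel 'I_n) := {p : 'I_n * 'I_n | o p.1 p.2}.

Definition num_edges (n : nat) (o : rel 'I_n) : nat :=
  #|[pred p : 'I_n * 'I_n | o p.1 p.2]|.

Definition three_colorable (n : nat) (o : rel 'I_n) : Prop :=
  exists f : 'I_n -> 'I_3, forall u v, o u v || o v u -> f u != f v.

(* Path kinds k : 'I_8 for an oriented edge e = (u,v):
   0: (1,2) u->x   1: (3,1) u->x   2: (2,3) u->y   3: (2,1) v->x
   4: (3,2) v->x   5: (1,3) v->y   6: (4,1) x->z   7: (4,2) y->z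
   Internal vertices of each path: 'I_5. *)
Inductive vtx (n : nat) (o : rel 'I_n) : Type :=
| VOrig of 'I_n
| VX of edge_t o
| VY of edge_t o
| VZ of edge_t o
| VInt of edge_t o & 'I_8 & 'I_5
| VA | VB | VC | VD.
Arguments VOrig {n o}. Arguments VX {n o}. Arguments VY {n o}.
Arguments VZ {n o}. Arguments VInt {n o}.
Arguments VA {n o}. Arguments VB {n o}. Arguments VC {n o}. Arguments VD {n o}.

Definition pstart (n : nat) (o : rel 'I_n) (e : edge_t o) (k : 'I_8) : vtx o :=
  match nat_of_ord k with
  | 0 | 1 | 2 => VOrig (sval e).1
  | 3 | 4 | 5 => VOrig (sval e).2
  | 6 => VX e
  | _ => VY e
  end.

Definition pend (n : nat) (o : rel 'I_n) (e : edge_t o) (k : 'I_8) : vtx o :=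
  match nat_of_ord k with
  | 0 | 1 | 3 | 4 => VX e
  | 2 | 5 => VY e
  | _ => VZ e
  end.

Definition pa (k : 'I_8) : nat :=
  match nat_of_ord k with
  | 0 => 1 | 1 => 3 | 2 => 2 | 3 => 2 | 4 => 3 | 5 => 1 | _ => 4
  end.

Definition pb (k : 'I_8) : nat :=
  match nat_of_ord k with
  | 0 => 2 | 1 => 1 | 2 => 3 | 3 => 1 | 4 => 2 | 5 => 3 | 6 => 1 | _ => 2
  end.

Definition pathv (n : nat) (o : rel 'I_n) (e : edge_t o) (k : 'I_8) (i : 'I_7)
  : vtx o :=
  if nat_of_ord i == 0 then pstart e k
  else if nat_of_ord i == 6 then pend e k
  else VInt e k (inord (nat_of_ord i).-1).

Inductive adj0 (n : nat) (o : rel 'I_n) : vtx o -> vtx o -> Prop :=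
| adj_ux e : adj0 (VOrig (sval e).1) (VX e)
| adj_uy e : adj0 (VOrig (sval e).1) (VY e)
| adj_path e k (i j : 'I_7) :
    nat_of_ord j = (nat_of_ord i).+1 -> adj0 (pathv e k i) (pathv e k j)
| adj_zc e : adj0 (VZ e) VC
| adj_ab : adj0 VA VB
| adj_ac : adj0 VA VC
| adj_ad : adj0 VA VD
| adj_bc : adj0 VB VC
| adj_bd : adj0 VB VD.

Definition Gadj (n : nat) (o : rel 'I_n) (x y : vtx o) : Prop :=
  adj0 x y \/ adj0 y x.

Definition Glist (n : nat) (o : rel 'I_n)
  (Lint : edge_t o -> 'I_8 -> 'I_5 -> seq nat) (x : vtx o) : seq nat :=
  match x with
  | VOrig _ => [:: 1; 2; 3]
  | VX _ => [:: 1; 2; 4]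
  | VY _ => [:: 3; 4]
  | VZ _ => [:: 1; 2; 4]
  | VInt e k i => Lint e k i
  | VA => [:: 1; 2; 3]
  | VB => [:: 1; 2]
  | VC => [:: 3; 4]
  | VD => [:: 4]
  end.

Definition alpha_spec (n : nat) (o : rel 'I_n)
  (Lint : edge_t o -> 'I_8 -> 'I_5 -> seq nat) (al : vtx o -> nat) : Prop :=
  [/\ forall u, al (VOrig u) = 1,
      forall e, [/\ al (VX e) = 4, al (VY e) = 4 & al (VZ e) = 4],
      [/\ al VA = 1, al VB = 2, al VC = 3 & al VD = 4] &
      is_Lcol (@Gadj n o) (Glist Lint) al].

Definition beta_of (n : nat) (o : rel 'I_n) (al : vtx o -> nat) (x : vtx o) : nat :=
  match x with
  | VA => 2
  | VB => 1
  | _ => al x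
  end.

(* Main.v *)
Require Import Defs.
From mathcomp Require Import all_boot.
From Stdlib Require Import FunctionalExtensionality.
From mathcomp Require Import zify.
From Stdlib Require Import Lia.
Set Implicit Arguments.
Unset Strict Implicit.
Unset Printing Implicit Defensive.

Section Generic.
Variables (V : Type) (adj : V -> V -> Prop) (L : V -> seq nat).

Definition Rk (P : (V -> nat) -> Prop) (k : nat) (a b : V -> nat) : Prop :=
  exists s : nat -> V -> nat,
    [/\ recol_seq adj L s k, s 0 = a, s k = b & forall i, i <= k -> P (s i)].

Lemma step_ok_sym (f g : V -> nat) : step_ok f g -> step_ok g f.
Proof.
case=> [H|[w [Hw H]]]; [left=> x; by rewrite H | right; exists w; split].
  by move=> E; apply: Hw.
by move=> x /H ->.
Qed.

Lemma Rk_refl P a : is_Lcol adj L a -> P a -> Rk P 0 a a.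
Proof.
move=> Ha Pa; exists (fun _ => a); split=> //; split=> // i _; by left.
Qed.

Lemma Rk_one P a b : is_Lcol adj L a -> is_Lcol adj L b -> P a -> P b ->
  step_ok a b -> Rk P 1 a b.
Proof.
move=> Ha Hb Pa Pb Hab; exists (fun i => if i == 0 then a else b); split=> //.
  split; first by case=> [|[|]].
  by case.
by case=> [|[|]].
Qed.

Lemma Rk_weaken (P Q : (V -> nat) -> Prop) k a b :
  (forall c, P c -> Q c) -> Rk P k a b -> Rk Q k a b.
Proof. move=> PQ [s [H1 H2 H3 H4]]; exists s; split=> // i /H4; exact: PQ. Qed.

Lemma Rk_trans P k1 k2 a b c : Rk P k1 a b -> Rk P k2 b c -> Rk P (k1 + k2) a c.
Proof.
move=> [s1 [[L1 S1] A1 B1 P1]] [s2 [[L2 S2] A2 B2 P2]].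
pose s i := if i <= k1 then s1 i else s2 (i - k1).
have E: forall i, k1 <= i -> s i = s2 (i - k1).
  move=> i Hi; rewrite /s; case: ifP => // Hik.
  have -> : i = k1 by apply/eqP; rewrite eqn_leq Hik Hi.
  by rewrite subnn B1 A2.
exists s; split.
- split.
  + move=> i Hi; case: (leqP i k1) => Hik.
    * by rewrite /s Hik; apply: L1.
    * rewrite E ?(ltnW Hik) //; apply: L2; rewrite leq_subLR //.
  + move=> i Hi; case: (ltnP i k1) => Hik.
    * by rewrite /s Hik (ltnW Hik); apply: S1.
    * rewrite !E ?(leqW Hik) // subSn //; apply: S2; rewrite ltn_subLR //.
- by rewrite /s leq0n.
- by rewrite E ?leq_addr // addKn.
- move=> i Hi; case: (leqP i k1) => Hik.
  + by rewrite /s Hik; apply: P1.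
  + rewrite E ?(ltnW Hik) //; apply: P2; rewrite leq_subLR //.
Qed.

Lemma Rk_mono P k k' a b : k <= k' -> Rk P k a b -> Rk P k' a b.
Proof.
move=> Hk [s [[L1 S1] A1 B1 P1]]; exists (fun i => s (minn i k)); split.
- split; first by move=> i _; apply: L1; exact: geq_minr.
  move=> i Hi; case: (ltnP i k) => Hik.
    have -> : minn i.+1 k = i.+1 by apply/minn_idPl.
    by apply: S1.
  have -> : minn i.+1 k = k by apply/minn_idPr; exact: leqW.
  by left.
- by rewrite min0n.
- by have -> : minn k' k = k by apply/minn_idPr.
- move=> i _; apply: P1; exact: geq_minr.
Qed.

Lemma Rk_sym P k a b : Rk P k a b -> Rk P k b a.
Proof.
move=> [s [[L1 S1] A1 B1 P1]]; exists (fun i => s (k - i)); split.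
- split; first by move=> i _; apply: L1; exact: leq_subr.
  move=> i Hi; have -> : k - i = (k - i.+1).+1 by rewrite subnSK.
  apply: step_ok_sym; apply: S1; rewrite subnSK // leq_subr //.
- by rewrite subn0.
- by rewrite subnn.
- move=> i _; apply: P1; exact: leq_subr.
Qed.

End Generic.

Lemma Rk_map (V W : Type) (adjV : V -> V -> Prop) (LV : V -> seq nat)
  (adjW : W -> W -> Prop) (LW : W -> seq nat) (P : (V -> nat) -> Prop)
  (Q : (W -> nat) -> Prop) (F : (V -> nat) -> (W -> nat)) k a b :
  (forall c, P c -> is_Lcol adjV LV c -> is_Lcol adjW LW (F c) /\ Q (F c)) ->
  (forall c d, P c -> P d -> step_ok c d -> step_ok (F c) (F d)) ->
  Rk adjV LV P k a b -> Rk adjW LW Q k (F a) (F b).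
Proof.
move=> HF HS [s [[L1 S1] A1 B1 P1]]; exists (fun i => F (s i)); split.
- split; first by move=> i Hi; case: (HF _ (P1 _ Hi) (L1 _ Hi)).
  move=> i Hi; apply: HS; [apply: P1; exact: ltnW|apply: P1; exact: Hi|exact: S1].
- by rewrite /= A1.
- by rewrite /= B1.
- by move=> i Hi; case: (HF _ (P1 _ Hi) (L1 _ Hi)).
Qed.

Lemma compress (V : finType) (adj : V -> V -> Prop) L P (s : nat -> V -> nat) M :
  recol_seq adj L s M -> (forall i, i <= M -> P (s i)) ->
  (forall i j w, i < j -> j < M -> s i w <> s i.+1 w -> s j w <> s j.+1 w -> False) ->
  Rk adj L P #|V| (s 0) (s M).
Proof.
move=> [L1 S1] P1 Inj.
pose chg N := [set w | has (fun i => s i w != s i.+1 w) (iota 0 N)].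
suff H: forall N, N <= M -> Rk adj L P #|chg N| (s 0) (s N).
  by apply: Rk_mono (H M (leqnn M)); exact: max_card.
elim=> [|N IH] HN.
  have -> : chg 0 = set0 by apply/setP=> w; rewrite !inE.
  rewrite cards0; apply: Rk_refl; [exact: L1|exact: P1].
have IH' := IH (ltnW HN).
case: (S1 N HN) => [Hid|[w [Hw Hneq]]].
  have E : s N.+1 = s N by apply: functional_extensionality => x; rewrite Hid.
  have -> : chg N.+1 = chg N.
    apply/setP=> x; rewrite !inE -addn1 iotaD has_cat /= Hid eqxx !orbF //.
  by rewrite E.
have -> : chg N.+1 = w |: chg N.
  apply/setP=> x; rewrite !inE -addn1 iotaD has_cat /= orbF add0n.
  case: (eqVneq x w) => [->|Hx] /=.
    by apply/orP; right; apply/eqP.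
  suff -> : (s N x != s N.+1 x) = false by rewrite orbF.
  by apply/negbTE; rewrite negbK; apply/eqP; apply: Hneq; apply/eqP.
rewrite cardsU1.
have -> : w \notin chg N.
  rewrite inE; apply/negP => /hasP [i]; rewrite mem_iota add0n => /andP [_ Hi] /eqP Hiw.
  by apply: (Inj i N w).
rewrite add1n -addn1; apply: Rk_trans IH' _; apply: Rk_one.
- exact: L1 (ltnW HN).
- exact: L1.
- exact: P1 (ltnW HN).
- exact: P1.
- by right; exists w.
Qed.

Fixpoint inl (V : Type) (x : V) (l : seq V) : Prop :=
  if l is y :: l' then y = x \/ inl x l' else False.

Lemma indep (V : Type) (dec : forall x y : V, {x = y} + {x <> y})
  (adj : V -> V -> Prop) L ws : forall a b,
  is_Lcol adj L a -> is_Lcol adj L b -> (forall w, ~ inl w ws -> a w = b w) ->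
  (forall x y, adj x y -> a x = b x \/ a y = b y) ->
  Rk adj L (fun c => forall w, ~ inl w ws -> c w = a w) (size ws) a b.
Proof.
elim: ws => [|w ws IH] a b Ha Hb Hd Hadj /=.
  have -> : b = a by apply: functional_extensionality => x; rewrite Hd.
  by apply: Rk_refl.
pose a1 x := if dec x w then b x else a x.
have Ha1 : is_Lcol adj L a1.
  split=> [x|x y Hxy]; rewrite /a1.
    by case: (dec x w) => _ /=; [exact: (proj1 Hb)|exact: (proj1 Ha)].
  case: (dec x w) => [Ex|Hx]; case: (dec y w) => [Ey|Hy] /=.
  - by move: Hxy; rewrite Ex Ey => Hxy; exact: (proj2 Hb _ _ Hxy).
  - move: Hxy; rewrite Ex => Hxy; case: (Hadj _ _ Hxy) => E.
      by rewrite -E; apply: (proj2 Ha).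
    by rewrite E; apply: (proj2 Hb).
  - move: Hxy; rewrite Ey => Hxy; case: (Hadj _ _ Hxy) => E.
      by rewrite E; apply: (proj2 Hb).
    by rewrite -E; apply: (proj2 Ha).
  - exact: (proj2 Ha).
have R1 : Rk adj L (fun c => forall v, ~ (w = v \/ inl v ws) -> c v = a v) 1 a a1.
  apply: Rk_one => //.
  - move=> v Hv; rewrite /a1; case: (dec v w) => // E.
    by case: Hv; left.
  - case: (eqVneq (a w) (b w)) => [E|E].
      left=> x; rewrite /a1; case: (dec x w) => [Ex|] //=.
      by rewrite Ex.
    right; exists w; split; first by rewrite /a1; case: (dec w w) => //= _; apply/eqP.
    by move=> x Hx; rewrite /a1; case: (dec x w).
have R2 := IH a1 b Ha1 Hb.
have := Rk_trans R1 (Rk_weaken _ (R2 _ _)); apply.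
- move=> c Hc v Hv; rewrite Hc; last by move=> H; apply: Hv; right.
  by rewrite /a1; case: (dec v w) => // E; case: Hv; left.
- move=> v Hv; rewrite /a1; case: (dec v w) => // Hvw.
  by apply: Hd => -[E|]; [apply: Hvw|].
- move=> x y Hxy; rewrite /a1.
  case: (dec x w) => Hx; first by left.
  case: (dec y w) => Hy; first by right.
  exact: Hadj.
Qed.

Section Graph.
Variables (n : nat) (o : rel 'I_n) (Lint : edge_t o -> 'I_8 -> 'I_5 -> seq nat).
Implicit Types (e : edge_t o) (k : 'I_8) (c : vtx o -> nat).

Definition is_int (x : vtx o) : bool := if x is VInt _ _ _ then true else false.
Definition gp (c : vtx o -> nat) e k : 'I_7 -> nat := fun i => c (pathv e k i).
Definition Lp e k : 'I_7 -> seq nat := fun i => Glist Lint (pathv e k i).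

Lemma pstart_main e k : is_int (pstart e k) = false.
Proof. by rewrite /pstart; case: (nat_of_ord k) => [|[|[|[|[|[|[|?]]]]]]]. Qed.
Lemma pend_main e k : is_int (pend e k) = false.
Proof. by rewrite /pend; case: (nat_of_ord k) => [|[|[|[|[|[|[|?]]]]]]]. Qed.

Lemma pathv_int e k (j : 'I_5) : pathv e k (inord j.+1) = VInt e k j.
Proof.
have Hj := ltn_ord j.
rewrite /pathv inordK; last by lia.
have -> : (j.+1 == 6) = false by apply/negbTE; rewrite neq_ltn ltnS Hj.
by rewrite /= inord_val.
Qed.

Lemma pathv0 e k (i : 'I_7) : nat_of_ord i = 0 -> pathv e k i = pstart e k.
Proof. by rewrite /pathv => ->. Qed.
Lemma pathv6 e k (i : 'I_7) : nat_of_ord i = 6 -> pathv e k i = pend e k.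
Proof. by rewrite /pathv => ->. Qed.

Lemma is_int_pathv e k i :
  is_int (pathv e k i) = (nat_of_ord i != 0) && (nat_of_ord i != 6).
Proof.
rewrite /pathv; case: eqP => [_|_]; first by rewrite pstart_main.
case: eqP => [_|_]; first by rewrite pend_main.
by [].
Qed.

Definition mainOK (c : vtx o -> nat) : Prop :=
  [/\ forall x, ~~ is_int x -> c x \in Glist Lint x,
      forall e, c (VOrig (sval e).1) <> c (VX e),
      forall e, c (VOrig (sval e).1) <> c (VY e),
      forall e, c (VZ e) <> c VC &
      [&& c VA != c VB, c VA != c VC, c VA != c VD, c VB != c VC & c VB != c VD]].

Lemma Lcol_char c :
  is_Lcol (@Gadj n o) (Glist Lint) c <->
  mainOK c /\ forall e k, is_Lcol padj (Lp e k) (gp c e k).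
Proof.
split.
  move=> [HL HA]; have HA0 : forall x y, adj0 x y -> c x <> c y.
    by move=> x y H; apply: HA; left.
  split.
    split=> //; try by move=> e; apply: HA0; constructor.
    by rewrite !(introN eqP (HA0 _ _ _)) //; constructor.
  move=> e k; split=> [i|i j [H|H]]; first exact: HL.
    by apply: HA0; apply: adj_path.
  by move=> E; apply: (HA0 _ _ (adj_path e k H)).
move=> [[HL H1 H2 H3 H4] HP]; split.
  case=> [u|e|e|e|e k j| | | |]; try exact: HL.
  by rewrite -(pathv_int e k j); case: (HP e k) => + _; apply.
have HA0 : forall x y, adj0 x y -> c x <> c y.
  move=> x y; case=> [e|e|e k i j Hij|e| | | | |] //.
  - exact: (proj2 (HP e k) i j (or_introl Hij)).
  - by apply/eqP; case/and5P: H4.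
  - by apply/eqP; case/and5P: H4.
  - by apply/eqP; case/and5P: H4.
  - by apply/eqP; case/and5P: H4.
  - by apply/eqP; case/and5P: H4.
move=> x y [H|H]; first exact: HA0.
by move=> E; apply: (HA0 _ _ H).
Qed.


Definition ovr c e k (h : 'I_7 -> nat) : vtx o -> nat := fun x =>
  match x with
  | VInt e' k' j => if (e' == e) && (k' == k) then h (inord j.+1) else c x
  | _ => c x
  end.

Lemma ovr_main c e k h x : ~~ is_int x -> ovr c e k h x = c x.
Proof. by case: x. Qed.

Lemma inord_mid (i : 'I_7) : nat_of_ord i != 0 -> nat_of_ord i != 6 ->
  (inord (nat_of_ord (inord (nat_of_ord i).-1 : 'I_5)).+1 : 'I_7) = i.
Proof.
move=> H0 H6; have Hi := ltn_ord i.
rewrite inordK; last by lia.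
rewrite prednK; last by lia.
by rewrite inord_val.
Qed.

Lemma pu0 (i : 'I_7) : nat_of_ord i = 0 -> i = pu.
Proof. by move=> H; apply: val_inj. Qed.
Lemma pv6 (i : 'I_7) : nat_of_ord i = 6 -> i = pv.
Proof. by move=> H; apply: val_inj. Qed.

Lemma gp_ovr_same c e k h : h pu = c (pstart e k) -> h pv = c (pend e k) ->
  gp (ovr c e k h) e k = h.
Proof.
move=> Hu Hv; apply: functional_extensionality => i; rewrite /gp /pathv.
case: eqP => [/pu0 ->|H0]; first by rewrite ovr_main ?pstart_main.
case: eqP => [/pv6 ->|H6]; first by rewrite ovr_main ?pend_main.
by rewrite /= !eqxx /= inord_mid //; apply/eqP.
Qed.

Lemma gp_ovr_other c e k h e' k' : (e', k') != (e, k) ->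
  gp (ovr c e k h) e' k' = gp c e' k'.
Proof.
move=> Hne; apply: functional_extensionality => i; rewrite /gp /pathv.
case: eqP => H0; first by rewrite ovr_main ?pstart_main.
case: eqP => H6; first by rewrite ovr_main ?pend_main.
by move: Hne; rewrite /= xpair_eqE => /negbTE ->.
Qed.

Lemma ovr_gp c e k : ovr c e k (gp c e k) = c.
Proof.
apply: functional_extensionality => x; case: x => // e' k' j /=.
by case: andP => // [[/eqP -> /eqP ->]]; rewrite /gp pathv_int.
Qed.

Lemma mainOK_ext c c' : (forall x, ~~ is_int x -> c' x = c x) -> mainOK c -> mainOK c'.
Proof.
move=> E [H0 H1 H2 H3 H4]; split.
- by move=> x Hx; rewrite E //; apply: H0.
- by move=> e; rewrite !E //; apply: H1.
- by move=> e; rewrite !E //; apply: H2.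
- by move=> e; rewrite !E //; apply: H3.
- by rewrite !E.
Qed.

Lemma Lcol_ovr c e k h : is_Lcol (@Gadj n o) (Glist Lint) c ->
  is_Lcol padj (Lp e k) h -> h pu = c (pstart e k) -> h pv = c (pend e k) ->
  is_Lcol (@Gadj n o) (Glist Lint) (ovr c e k h).
Proof.
move=> /Lcol_char [Hm Hp] Hh Hu Hv; apply/Lcol_char; split.
  by apply: mainOK_ext Hm => x Hx; rewrite ovr_main.
move=> e' k'; case: (eqVneq (e', k') (e, k)) => [[-> ->]|Hne].
  by rewrite gp_ovr_same.
by rewrite gp_ovr_other.
Qed.

Lemma step_ovr g e k t1 t2 :
  t1 pu = g (pstart e k) -> t1 pv = g (pend e k) ->
  t2 pu = g (pstart e k) -> t2 pv = g (pend e k) ->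
  step_ok t1 t2 -> step_ok (ovr g e k t1) (ovr g e k t2).
Proof.
move=> H1u H1v H2u H2v [Hid|[w [Hw Hoth]]].
  by left=> x; case: x => //= e' k' j; case: ifP.
have W0 : nat_of_ord w != 0.
  by apply/eqP => /pu0 E; apply: Hw; rewrite E H1u H2u.
have W6 : nat_of_ord w != 6.
  by apply/eqP => /pv6 E; apply: Hw; rewrite E H1v H2v.
right; exists (VInt e k (inord (nat_of_ord w).-1)); split.
  by rewrite /= !eqxx /= inord_mid.
case=> //= e' k' j Hx; case: ifP => // /andP [/eqP E1 /eqP E2].
apply: Hoth => E; apply: Hx; rewrite E1 E2 -E.
have Hj := ltn_ord j.
by congr VInt; apply: val_inj; rewrite /= inordK ?inordK //; lia.
Qed.

Definition endupd (h : 'I_7 -> nat) (x y : nat) : 'I_7 -> nat := fun i =>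
  if nat_of_ord i == 0 then x else if nat_of_ord i == 6 then y else h i.

Lemma endupd_id h : endupd h (h pu) (h pv) = h.
Proof.
apply: functional_extensionality => i; rewrite /endupd.
case: eqP => [/pu0 -> //|_]; case: eqP => [/pv6 -> //|_] //.
Qed.


Hypothesis Hforb : forall e k, forbidding (Lp e k) (pa k) (pb k).

Definition mconst g := fun c : vtx o -> nat => forall w, ~~ is_int w -> c w = g w.

Lemma prepare1 g e k x y :
  is_Lcol (@Gadj n o) (Glist Lint) g ->
  x \in Glist Lint (pstart e k) -> y \in Glist Lint (pend e k) ->
  (x <> pa k \/ y <> pb k) -> (x = g (pstart e k) \/ y = g (pend e k)) ->
  exists h, [/\ Rk (@Gadj n o) (Glist Lint) (mconst g) 7 g (ovr g e k h),
              h pu = g (pstart e k), h pv = g (pend e k) &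
              is_Lcol padj (Lp e k) (endupd h x y)].
Proof.
move=> Hg Hx Hy Had Hor.
have Hg0 : is_Lcol padj (Lp e k) (gp g e k) by case/Lcol_char: Hg => _; apply.
case: (Hforb e k) => _ /(_ (gp g e k) x y Hg0 Hx Hy Had Hor).
case=> m [s [[Ls Ss] Hs0 [Hxm Hym] Hend Honce]].
set M := m.-1.
have HMm : M <= m by rewrite /M leq_pred.
pose Pp := fun c : 'I_7 -> nat => c pu = g (pstart e k) /\ c pv = g (pend e k).
have PM : forall i, i <= M -> Pp (s i).
  move=> i Hi; case: (posnP m) => [Hm0|Hmp].
    by move: Hi; rewrite /M Hm0 leqn0 => /eqP ->; rewrite /Pp !Hs0.
  by case: (Hend i) => //; move: Hi; rewrite /M; lia.
have Rp : Rk padj (Lp e k) Pp #|'I_7| (s 0) (s M).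
  apply: compress => //.
  - split=> [i Hi|i Hi]; [apply: Ls; exact: leq_trans HMm|apply: Ss; exact: leq_trans Hi HMm].
  - move=> i j w Hij HjM Hi Hj.
    have Him : i.+1 < m by move: HjM Hij; rewrite /M; lia.
    have Hi' : i < m by lia.
    case: (eqVneq w pu) => [Ew|Nu].
      by apply: Hi; rewrite Ew (proj1 (Hend _ Hi')) (proj1 (Hend _ Him)).
    case: (eqVneq w pv) => [Ew|Nv].
      by apply: Hi; rewrite Ew (proj2 (Hend _ Hi')) (proj2 (Hend _ Him)).
    apply: (Honce w _ _ i j) => //; [exact/eqP|exact/eqP|lia].
rewrite card_ord in Rp.
have E0 : s 0 = gp g e k by apply: functional_extensionality => i; rewrite Hs0.
rewrite E0 in Rp.
have [PMu PMv] := PM M (leqnn M).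
exists (s M); split=> //.
- have R := @Rk_map _ _ padj (Lp e k) (@Gadj n o) (Glist Lint) Pp (mconst g)
     (ovr g e k) _ _ _ _ _ Rp.
  rewrite ovr_gp in R; apply: R.
    move=> c [Hu Hv] Hc; split; first by apply: Lcol_ovr.
    by move=> w Hw; rewrite ovr_main.
  move=> c d [Hcu Hcv] [Hdu Hdv]; exact: step_ovr.
- have Hsm : is_Lcol padj (Lp e k) (s m) by apply: Ls.
  suff [[-> ->]|Hint] : (x = s M pu /\ y = s M pv) \/
         (forall i, nat_of_ord i != 0 -> nat_of_ord i != 6 -> s m i = s M i).
    + by rewrite endupd_id; apply: Ls.
    + have -> : endupd (s M) x y = s m.
        apply: functional_extensionality => i; rewrite /endupd.
        case: eqP => [/pu0 -> //|/eqP H0]; case: eqP => [/pv6 -> //|/eqP H6].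
        by rewrite Hint.
      exact: Hsm.
  case: (posnP m) => [Hm0|Hmp].
    by left; move: Hxm Hym; rewrite /M Hm0 => -> ->.
  have [m' Em] : exists m', m = m'.+1 by exists m.-1; rewrite prednK.
  have EM : M = m' by rewrite /M Em.
  rewrite EM Em; rewrite Em in Hxm Hym.
  case: (Ss m') => [|Hid|[w [Hw Hoth]]]; first by rewrite Em.
    by right=> i _ _; rewrite Hid.
  case: (eqVneq w pu) => [Ew|Nu].
    right=> i H0 _; apply/esym/Hoth; rewrite Ew => E; move: H0; rewrite E eqxx //.
  case: (eqVneq w pv) => [Ew|Nv].
    right=> i _ H6; apply/esym/Hoth; rewrite Ew => E; move: H6; rewrite E eqxx //.
  left; rewrite -Hxm -Hym; split; apply/esym/Hoth; apply/eqP; by rewrite eq_sym.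
Qed.


Lemma Rk_Lcol (V : Type) adj L (P : (V -> nat) -> Prop) (m : nat) a b :
  Rk adj L P m a b -> is_Lcol adj L b.
Proof. by case=> s [[Ls _] _ <- _]; apply: Ls. Qed.

Lemma prepare_all (tx ty : edge_t o -> 'I_8 -> nat) ps : forall g,
  is_Lcol (@Gadj n o) (Glist Lint) g ->
  (forall e k, (e, k) \in ps ->
     [/\ tx e k \in Glist Lint (pstart e k), ty e k \in Glist Lint (pend e k),
         (tx e k <> pa k \/ ty e k <> pb k) &
         (tx e k = g (pstart e k) \/ ty e k = g (pend e k))]) ->
  exists g', [/\ Rk (@Gadj n o) (Glist Lint) (mconst g) (7 * size ps) g g',
      forall w, ~~ is_int w -> g' w = g w,
      forall e k, (e, k) \notin ps -> gp g' e k = gp g e k &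
      forall e k, (e, k) \in ps ->
        is_Lcol padj (Lp e k) (endupd (gp g' e k) (tx e k) (ty e k))].
Proof.
elim: ps => [|[e k] ps IH] g Hg Hc.
  exists g; split=> //; rewrite muln0; exact: Rk_refl.
have [C1 C2 C3 C4] := Hc e k (mem_head _ _).
have [h [R1 Hu Hv Hh]] := prepare1 Hg C1 C2 C3 C4.
set g1 := ovr g e k h in R1.
have Hg1 : is_Lcol (@Gadj n o) (Glist Lint) g1 := Rk_Lcol R1.
have M1 : forall w, ~~ is_int w -> g1 w = g w by move=> w Hw; rewrite /g1 ovr_main.
have [|g' [R2 M2 N2 I2]] := IH g1 Hg1.
  move=> e' k' H; have Hin : (e', k') \in (e, k) :: ps by rewrite in_cons H orbT.
  have [D1 D2 D3 D4] := Hc e' k' Hin.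
  by split=> //; rewrite !M1 ?pstart_main ?pend_main.
exists g'; split.
- rewrite /= mulnS; apply: Rk_trans R1 (Rk_weaken _ R2).
  by move=> c Hc' w Hw; rewrite Hc' // M1.
- by move=> w Hw; rewrite M2 // M1.
- move=> e' k'; rewrite in_cons negb_or => /andP [Hne Hn].
  by rewrite N2 // gp_ovr_other.
- move=> e' k'; rewrite in_cons; case: (boolP ((e', k') \in ps)) => [Hin _|Hn].
    exact: I2.
  rewrite orbF => /eqP [Ee Ek]; subst e' k'; rewrite N2 //.
  by rewrite /g1 gp_ovr_same.
Qed.


Definition vtx_dec : forall x y : vtx o, {x = y} + {x <> y}.
Proof. decide equality; apply: eq_comparable. Defined.

Lemma bigstep g Tp T (ws : seq (vtx o)) :
  is_Lcol (@Gadj n o) (Glist Lint) g ->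
  (forall w, ~~ is_int w -> g w = Tp w) ->
  mainOK T ->
  (forall w, ~~ is_int w -> ~ inl w ws -> T w = Tp w) ->
  (forall x y, adj0 x y -> ~~ is_int x -> ~~ is_int y -> T x = Tp x \/ T y = Tp y) ->
  (forall e k, T (pstart e k) = Tp (pstart e k) \/ T (pend e k) = Tp (pend e k)) ->
  (forall e k, T (pstart e k) <> pa k \/ T (pend e k) <> pb k) ->
  exists g', Rk (@Gadj n o) (Glist Lint)
     (fun c => forall w, ~~ is_int w -> ~ inl w ws -> c w = Tp w)
     (7 * #|{: edge_t o * 'I_8}| + size ws) g g' /\ (forall w, ~~ is_int w -> g' w = T w).
Proof.
move=> Hg HgT HT Hws Hadj Hch Had.
have [HTL _ _ _ _] := HT.
have [|gs [R1 M1 _ I1]] := @prepare_all (fun e k => T (pstart e k)) (fun e k => T (pend e k))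
   (enum {: edge_t o * 'I_8}) g Hg.
  move=> e k _; split.
  - by apply: HTL; rewrite pstart_main.
  - by apply: HTL; rewrite pend_main.
  - exact: Had.
  - by rewrite !HgT ?pstart_main ?pend_main.
pose g2 := fun w => if is_int w then gs w else T w.
have Hgs : is_Lcol (@Gadj n o) (Glist Lint) gs := Rk_Lcol R1.
have Hg2 : is_Lcol (@Gadj n o) (Glist Lint) g2.
  apply/Lcol_char; split.
    by apply: mainOK_ext HT => x /negbTE Hx; rewrite /g2 Hx.
  move=> e k.
  have -> : gp g2 e k = endupd (gp gs e k) (T (pstart e k)) (T (pend e k)).
    apply: functional_extensionality => i; rewrite /gp /endupd /pathv.
    case: eqP => _; first by rewrite /g2 pstart_main.
    case: eqP => _; first by rewrite /g2 pend_main.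
    by [].
  by apply: I1; rewrite mem_enum.
have R2 := indep vtx_dec (ws := ws) Hgs Hg2.
have C1 : forall w, ~ inl w ws -> gs w = g2 w.
  move=> w Hw; rewrite /g2; case: ifP => // /negbT Hi.
  by rewrite M1 // HgT // Hws.
have C2 : forall x y, Gadj x y -> gs x = g2 x \/ gs y = g2 y.
  move=> x y Hxy; rewrite /g2.
  case: ifP => Hx; first by left.
  case: ifP => Hy; first by right.
  have Hx' : ~~ is_int x by rewrite Hx.
  have Hy' : ~~ is_int y by rewrite Hy.
  rewrite !M1 // !HgT //.
  case: Hxy => H.
    by case: (Hadj _ _ H) => // ->; [left|right].
  by case: (Hadj _ _ H) => // ->; [right|left].
exists g2; split; last by move=> w /negbTE Hw; rewrite /g2 Hw.
have R2' := R2 C1 C2.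
rewrite cardE; apply: Rk_trans (Rk_weaken _ R1) (Rk_weaken _ R2').
  by move=> c Hc w Hw _; rewrite Hc // HgT.
by move=> c Hc w Hw Hin; rewrite Hc // M1 // HgT.
Qed.

End Graph.

Section Main.
Variables (n : nat) (o : rel 'I_n) (Lint : edge_t o -> 'I_8 -> 'I_5 -> seq nat).
Implicit Types (e : edge_t o) (k : 'I_8) (c : vtx o -> nat).

Lemma mainOK_of (T : vtx o -> nat) :
  (forall u, T (VOrig u) \in [:: 1; 2; 3]) ->
  (forall e, T (VX e) \in [:: 1; 2; 4]) ->
  (forall e, T (VY e) \in [:: 3; 4]) ->
  (forall e, T (VZ e) \in [:: 1; 2; 4]) ->
  T VA \in [:: 1; 2; 3] -> T VB \in [:: 1; 2] -> T VC \in [:: 3; 4] -> T VD \in [:: 4] ->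
  (forall e, T (VOrig (sval e).1) != T (VX e)) ->
  (forall e, T (VOrig (sval e).1) != T (VY e)) ->
  (forall e, T (VZ e) != T VC) ->
  [&& T VA != T VB, T VA != T VC, T VA != T VD, T VB != T VC & T VB != T VD] ->
  mainOK Lint T.
Proof.
move=> H1 H2 H3 H4 H5 H6 H7 H8 H9 H10 H11 H12; split=> //.
- by case.
- by move=> e; apply/eqP.
- by move=> e; apply/eqP.
- by move=> e; apply/eqP.
Qed.

Lemma adj_main x y : adj0 x y -> ~~ is_int x -> ~~ is_int y ->
  [\/ exists e, x = VOrig (sval e).1 /\ (y = VX e \/ y = VY e),
      exists e, x = VZ e /\ y = VC |
      is_int x = false /\ (match x with VA | VB => True | _ => False end)].
Proof.
case=> [e|e|e k i j Hij|e| | | | |] Hx Hy.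
- by constructor 1; exists e; split=> //; left.
- by constructor 1; exists e; split=> //; right.
- exfalso; move: Hx Hy; rewrite !is_int_pathv !negb_and !negbK => /orP [] /eqP Hi /orP [] /eqP Hj; lia.
- by constructor 2; exists e.
all: by constructor 3.
Qed.

Lemma pathv_nabc e k i :
  match pathv e k i with VA | VB | VC | VD => False | _ => True end.
Proof.
rewrite /pathv; case: eqP => _.
  by rewrite /pstart; case: (nat_of_ord k) => [|[|[|[|[|[|[|?]]]]]]].
case: eqP => _ //.
by rewrite /pend; case: (nat_of_ord k) => [|[|[|[|[|[|[|?]]]]]]].
Qed.

Lemma gp_nabc c c' e k :
  (forall x, match x with VA | VB | VC | VD => True | _ => c' x = c x end) ->
  gp c' e k = gp c e k.
Proof.
move=> H; apply: functional_extensionality => i; rewrite /gp.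
have := pathv_nabc e k i; have := H (pathv e k i).
by case: (pathv e k i).
Qed.


Lemma inl_cat (V : Type) (x : V) s1 s2 : inl x (s1 ++ s2) <-> inl x s1 \/ inl x s2.
Proof.
elim: s1 => [|y s1 IH] /=; first by split; [right|case].
split; [case=> [->|/IH [H|H]]|case=> [[->|H]|H]].
- by left; left.
- by left; right.
- by right.
- by left.
- by right; apply/IH; left.
- by right; apply/IH; right.
Qed.

Lemma inl_map (T : eqType) (V : Type) (F : T -> V) y l : y \in l -> inl (F y) (map F l).
Proof.
elim: l => [|z l IH] //=; rewrite in_cons => /orP [/eqP ->|H]; [by left|right; exact: IH].
Qed.

Lemma inl_map_inv (T : Type) (V : Type) (F : T -> V) x l :
  inl x (map F l) -> exists y, x = F y.
Proof. elim: l => [|z l IH] //= [<-|/IH //]; by exists z. Qed.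


Lemma hadj_of (T Tp : vtx o -> nat) :
  (forall e, T (VOrig (sval e).1) = Tp (VOrig (sval e).1) \/
             (T (VX e) = Tp (VX e) /\ T (VY e) = Tp (VY e))) ->
  (forall e, T (VZ e) = Tp (VZ e) \/ T VC = Tp VC) ->
  T VA = Tp VA -> T VB = Tp VB ->
  forall x y, adj0 x y -> ~~ is_int x -> ~~ is_int y -> T x = Tp x \/ T y = Tp y.
Proof.
move=> H1 H2 HA HB x y Hxy Hx Hy.
case: (adj_main Hxy Hx Hy) => [[e [-> [->|->]]]|[e [-> ->]]|[_ Hm]].
- by case: (H1 e) => [|[]]; [left|right].
- by case: (H1 e) => [|[]]; [left|right].
- exact: H2.
- left; move: Hm; case: x {Hxy Hx} => // _.
Qed.

Hypothesis Hforb : forall e k, forbidding (Lp Lint e k) (pa k) (pb k).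
Variable al : vtx o -> nat.
Hypothesis Hal : alpha_spec Lint al.
Variable f : 'I_n -> 'I_3.
Hypothesis Hf : forall u v, o u v || o v u -> f u != f v.

Lemma alO u : al (VOrig u) = 1. Proof. by case: Hal. Qed.
Lemma alX e : al (VX e) = 4. Proof. by case: Hal => _ /(_ e) []. Qed.
Lemma alY e : al (VY e) = 4. Proof. by case: Hal => _ /(_ e) []. Qed.
Lemma alZ e : al (VZ e) = 4. Proof. by case: Hal => _ /(_ e) []. Qed.
Lemma alA : al VA = 1. Proof. by case: Hal => _ _ []. Qed.
Lemma alB : al VB = 2. Proof. by case: Hal => _ _ []. Qed.
Lemma alC : al VC = 3. Proof. by case: Hal => _ _ []. Qed.
Lemma alD : al VD = 4. Proof. by case: Hal => _ _ []. Qed.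
Lemma alL : is_Lcol (@Gadj n o) (Glist Lint) al. Proof. by case: Hal. Qed.

Definition phi u : nat := if [exists v, o u v || o v u] then (f u).+1 else 1.
Arguments phi : simpl never.

Lemma phi_rng u : phi u \in [:: 1; 2; 3].
Proof.
rewrite /phi; case: ifP => // _; have := ltn_ord (f u).
by case: (nat_of_ord (f u)) => [|[|[|]]].
Qed.

Lemma phi_edge e : phi (sval e).1 != phi (sval e).2.
Proof.
case: e => [[u v] /= H].
have E1 : phi u = (f u).+1 by rewrite /phi; case: existsP => // -[]; exists v; rewrite H.
have E2 : phi v = (f v).+1 by rewrite /phi; case: existsP => // -[]; exists u; rewrite H orbT.
by rewrite E1 E2 eqSS; apply: Hf; rewrite H.
Qed.

Definition xtv p := if p == 1 then 4 else if p == 2 then 1 else 2.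
Definition ytv p := if p == 1 then 3 else 4.
Definition ztv p := if p == 1 then 2 else 1.

Definition T1 (w : vtx o) : nat :=
  match w with VOrig u => phi u | _ => al w end.
Definition T2 (w : vtx o) : nat :=
  match w with
  | VOrig u => phi u
  | VX e => xtv (phi (sval e).1)
  | VY e => ytv (phi (sval e).1)
  | _ => al w end.
Definition T3 (w : vtx o) : nat :=
  match w with
  | VOrig u => phi u
  | VX e => xtv (phi (sval e).1)
  | VY e => ytv (phi (sval e).1)
  | VZ e => ztv (phi (sval e).1)
  | _ => al w end.

Ltac vals e := move: (phi_rng (sval e).1) (phi_rng (sval e).2) (phi_edge e);
  case: (phi (sval e).1) => [|[|[|[|?]]]] //; case: (phi (sval e).2) => [|[|[|[|?]]]] //.

Ltac kcases := case=> [[|[|[|[|[|[|[|[|?]]]]]]]] ?] //; rewrite /pstart /pend /pa /pb /=.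

Lemma phi_ne u x : x \notin [:: 1; 2; 3] -> phi u != x.
Proof. by have := phi_rng u; case: (phi u) => [|[|[|[|?]]]] //; case: x => [|[|[|[|?]]]]. Qed.

Lemma mainOK_T1 : mainOK Lint T1.
Proof.
apply: mainOK_of => //=; try move=> e; rewrite ?alX ?alY ?alZ ?alA ?alB ?alC ?alD //.
all: first [exact: phi_rng | by rewrite phi_ne].
Qed.

Lemma mainOK_T2 : mainOK Lint T2.
Proof.
apply: mainOK_of => //=; try move=> e; rewrite ?alX ?alY ?alZ ?alA ?alB ?alC ?alD //.
all: first [exact: phi_rng | by rewrite phi_ne | by vals e].
Qed.

Lemma mainOK_T3 : mainOK Lint T3.
Proof.
apply: mainOK_of => //=; try move=> e; rewrite ?alX ?alY ?alZ ?alA ?alB ?alC ?alD //.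
all: first [exact: phi_rng | by rewrite phi_ne | by vals e].
Qed.


Lemma ch1 e k : T1 (pstart e k) = al (pstart e k) \/ T1 (pend e k) = al (pend e k).
Proof. move: k; kcases; first [by left | by right]. Qed.
Lemma ad1 e k : T1 (pstart e k) <> pa k \/ T1 (pend e k) <> pb k.
Proof. move: k; kcases; rewrite ?alX ?alY ?alZ; lia. Qed.
Lemma ch2 e k : T2 (pstart e k) = T1 (pstart e k) \/ T2 (pend e k) = T1 (pend e k).
Proof. move: k; kcases; first [by left | by right]. Qed.
Lemma ad2 e k : T2 (pstart e k) <> pa k \/ T2 (pend e k) <> pb k.
Proof. move: k; kcases; rewrite ?alZ; vals e; rewrite /xtv /ytv /ztv /=; lia. Qed.
Lemma ch3 e k : T3 (pstart e k) = T2 (pstart e k) \/ T3 (pend e k) = T2 (pend e k).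
Proof. move: k; kcases; first [by left | by right]. Qed.
Lemma ad3 e k : T3 (pstart e k) <> pa k \/ T3 (pend e k) <> pb k.
Proof. move: k; kcases; rewrite ?alZ; vals e; rewrite /xtv /ytv /ztv /=; lia. Qed.

Definition ws1 := map (fun e : edge_t o => @VOrig n o (sval e).1) (enum {: edge_t o})
               ++ map (fun e : edge_t o => @VOrig n o (sval e).2) (enum {: edge_t o}).
Definition ws2 := map (fun e : edge_t o => VX e) (enum {: edge_t o})
               ++ map (fun e : edge_t o => VY e) (enum {: edge_t o}).
Definition ws3 := map (fun e : edge_t o => VZ e) (enum {: edge_t o}).

Lemma ws1_ok w : ~~ is_int w -> ~ inl w ws1 -> T1 w = al w.
Proof.
case: w => //= u _ Hn; rewrite alO /phi; case: existsP => // -[v /orP [H|H]];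
  exfalso; apply: Hn; apply/inl_cat; [left|right].
- apply: (inl_map (fun e : edge_t o => @VOrig n o (sval e).1) (y := exist _ (u, v) H)).
  by rewrite mem_enum.
- apply: (inl_map (fun e : edge_t o => @VOrig n o (sval e).2) (y := exist _ (v, u) H)).
  by rewrite mem_enum.
Qed.

Lemma ws2_ok w : ~~ is_int w -> ~ inl w ws2 -> T2 w = T1 w.
Proof.
case: w => //= e _ Hn; exfalso; apply: Hn; apply/inl_cat; [left|right];
  apply: (inl_map _ (y := e)); by rewrite mem_enum.
Qed.

Lemma ws3_ok w : ~~ is_int w -> ~ inl w ws3 -> T3 w = T2 w.
Proof.
case: w => //= e _ Hn; exfalso; apply: Hn;
  apply: (inl_map _ (y := e)); by rewrite mem_enum.
Qed.

Lemma ws_abcd w : match w with VA | VB | VC | VD => True | _ => False end ->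
  ~ inl w ws1 /\ ~ inl w ws2 /\ ~ inl w ws3.
Proof.
move=> Hw; rewrite /ws1 /ws2 /ws3; split; [|split].
- move=> H; case: (proj1 (inl_cat _ _ _) H) => H'; case: (inl_map_inv H') => e E;
    by move: Hw; rewrite E.
- move=> H; case: (proj1 (inl_cat _ _ _) H) => H'; case: (inl_map_inv H') => e E;
    by move: Hw; rewrite E.
- move=> H'; case: (inl_map_inv H') => e E; by move: Hw; rewrite E.
Qed.


Definition PABCD (c : vtx o -> nat) : Prop := [/\ c VA = 1, c VB = 2, c VC = 3 & c VD = 4].

Lemma Lcol_beta c : PABCD c -> is_Lcol (@Gadj n o) (Glist Lint) c ->
  is_Lcol (@Gadj n o) (Glist Lint) (beta_of c).
Proof.
move=> [_ _ HC HD] /Lcol_char [[H0 H1 H2 H3 H4] HP]; apply/Lcol_char; split.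
  split=> //=; last by rewrite HC HD.
  by case=> //= *; apply: H0.
move=> e k; have -> : gp (beta_of c) e k = gp c e k by apply: gp_nabc; case.
exact: HP.
Qed.

Lemma step_beta c d : PABCD c -> PABCD d -> step_ok c d -> step_ok (beta_of c) (beta_of d).
Proof.
move=> [cA cB _ _] [dA dB _ _] [Hid|[w [Hw Ho]]].
  by left; case=> //=.
right; exists w; split.
  by move: Hw; case: w Ho => //= _; rewrite ?cA ?dA ?cB ?dB.
case=> //= *; apply: Ho => //.
Qed.

Section Final.
Variable g3 : vtx o -> nat.
Hypothesis Hg3 : is_Lcol (@Gadj n o) (Glist Lint) g3.
Hypothesis M3 : forall w, ~~ is_int w -> g3 w = T3 w.

Definition hA a b cc : vtx o -> nat := fun x =>
  match x with VA => a | VB => b | VC => cc | _ => g3 x end.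

Lemma Lcol_hA a b cc : a \in [:: 1; 2; 3] -> b \in [:: 1; 2] -> cc \in [:: 3; 4] ->
  [&& a != b, a != cc, a != 4, b != cc & b != 4] ->
  is_Lcol (@Gadj n o) (Glist Lint) (hA a b cc).
Proof.
move=> Ha Hb Hc Hd; apply/Lcol_char; split.
  apply: mainOK_of => //=; try move=> e; rewrite ?M3 //= ?alD //.
  all: try by first [exact: phi_rng | by rewrite phi_ne | by vals e].
  by clear Hd; move: Hc; vals e; case: cc => [|[|[|[|[|?]]]]].
move=> e k; have -> : gp (hA a b cc) e k = gp g3 e k by apply: gp_nabc; case.
by case/Lcol_char: Hg3 => _; apply.
Qed.

Lemma g3_hA : g3 = hA 1 2 3.
Proof.
apply: functional_extensionality; case=> //=; rewrite M3 //=; [exact: alA|exact: alB|exact: alC].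
Qed.

Lemma beta_hA : beta_of g3 = hA 2 1 3.
Proof.
apply: functional_extensionality; case=> //=; rewrite M3 //=; exact: alC.
Qed.

Lemma Rabcd : Rk (@Gadj n o) (Glist Lint) (fun _ => True) 5 g3 (beta_of g3).
Proof.
rewrite beta_hA {1}g3_hA.
have S : forall a b cc a' b' cc', a \in [:: 1; 2; 3] -> b \in [:: 1; 2] -> cc \in [:: 3; 4] ->
  [&& a != b, a != cc, a != 4, b != cc & b != 4] ->
  a' \in [:: 1; 2; 3] -> b' \in [:: 1; 2] -> cc' \in [:: 3; 4] ->
  [&& a' != b', a' != cc', a' != 4, b' != cc' & b' != 4] ->
  step_ok (hA a b cc) (hA a' b' cc') ->
  Rk (@Gadj n o) (Glist Lint) (fun _ => True) 1 (hA a b cc) (hA a' b' cc').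
  by move=> *; apply: Rk_one => //; apply: Lcol_hA.
have -> : 5 = 1 + 1 + 1 + 1 + 1 by [].
apply: Rk_trans (S 2 1 4 2 1 3 _ _ _ _ _ _ _ _ _) => //;
  last by right; exists VC; split => //; case=> //= *; congruence.
apply: Rk_trans (S 3 1 4 2 1 4 _ _ _ _ _ _ _ _ _) => //;
  last by right; exists VA; split => //; case=> //= *; congruence.
apply: Rk_trans (S 3 2 4 3 1 4 _ _ _ _ _ _ _ _ _) => //;
  last by right; exists VB; split => //; case=> //= *; congruence.
apply: Rk_trans (S 1 2 4 3 2 4 _ _ _ _ _ _ _ _ _) => //;
  last by right; exists VA; split => //; case=> //= *; congruence.
apply: S => //.
by right; exists VC; split => //; case=> //= *; congruence.
Qed.

End Final.

Lemma main_sec : exists (len : nat) (s : nat -> vtx o -> nat),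
  [/\ recol_seq (@Gadj n o) (Glist Lint) s len,
       (forall x, s 0 x = al x),
       (forall x, s len x = beta_of al x) &
       len <= 400 * (num_edges o + 1)].
Proof.
have [g1 [R1 M1]] := @bigstep n o Lint Hforb al al T1 ws1 alL (fun _ _ => erefl)
  mainOK_T1 ws1_ok (@hadj_of T1 al (fun e => or_intror (conj erefl erefl))
                     (fun e => or_introl erefl) erefl erefl) ch1 ad1.
have [g2 [R2 M2]] := @bigstep n o Lint Hforb g1 T1 T2 ws2 (Rk_Lcol R1) M1
  mainOK_T2 ws2_ok (@hadj_of T2 T1 (fun e => or_introl erefl)
                     (fun e => or_introl erefl) erefl erefl) ch2 ad2.
have [g3 [R3 M3]] := @bigstep n o Lint Hforb g2 T2 T3 ws3 (Rk_Lcol R2) M2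
  mainOK_T3 ws3_ok (@hadj_of T3 T2 (fun e => or_introl erefl)
                     (fun e => or_intror erefl) erefl erefl) ch3 ad3.
have Hg3 := Rk_Lcol R3.
have W : forall (Tp : vtx o -> nat) ws, Tp VA = 1 -> Tp VB = 2 -> Tp VC = 3 -> Tp VD = 4 ->
    ~ inl VA ws -> ~ inl VB ws -> ~ inl VC ws -> ~ inl VD ws ->
    forall c, (forall w, ~~ is_int w -> ~ inl w ws -> c w = Tp w) -> PABCD c.
  by move=> Tp ws HA HB HC HD NA NB NC ND c Hc; split; rewrite Hc.
have [NA1 [NA2 NA3]] := ws_abcd (w := VA) I.
have [NB1 [NB2 NB3]] := ws_abcd (w := VB) I.
have [NC1 [NC2 NC3]] := ws_abcd (w := VC) I.
have [ND1 [ND2 ND3]] := ws_abcd (w := VD) I.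
have Rf := Rk_trans (Rk_trans (Rk_weaken (W al ws1 alA alB alC alD NA1 NB1 NC1 ND1) R1)
                              (Rk_weaken (W T1 ws2 alA alB alC alD NA2 NB2 NC2 ND2) R2))
                    (Rk_weaken (W T2 ws3 alA alB alC alD NA3 NB3 NC3 ND3) R3).
have Rsw := Rk_sym (@Rk_map _ _ _ _ (@Gadj n o) (Glist Lint) PABCD (fun _ => True) (@beta_of n o)
   _ _ _ (fun c Pc Lc => conj (Lcol_beta Pc Lc) I) step_beta Rf).
have Rtot := Rk_trans (Rk_trans (Rk_weaken (fun _ _ => I) Rf) (Rabcd Hg3 M3)) Rsw.
case: Rtot => s [Hs Hs0 Hsl _].
eexists; exists s; split; [exact: Hs| by rewrite Hs0 | by rewrite Hsl |].
have Ec : #|{: edge_t o * 'I_8}| = num_edges o * 8 by rewrite card_prod card_ord /num_edges card_sig.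
rewrite /ws1 /ws2 /ws3 !size_cat !size_map Ec -!enumT -!cardT !card_sig -/(num_edges o).
lia.
Qed.

End Main.

Theorem mainTheorem7 :
  exists c : nat,
  forall (n : nat) (o : rel 'I_n),
    (forall u, ~~ o u u) ->
    (forall u v, o u v -> ~~ o v u) ->
    forall Lint : edge_t o -> 'I_8 -> 'I_5 -> seq nat,
    (forall e k i, all (fun col => 1 <= col <= 4) (Lint e k i)) ->
    (forall e k, forbidding (fun i => Glist Lint (pathv e k i)) (pa k) (pb k)) ->
    forall al : vtx o -> nat,
    alpha_spec Lint al ->
    three_colorable o ->
    exists (len : nat) (s : nat -> vtx o -> nat),
      [/\ recol_seq (@Gadj n o) (Glist Lint) s len,
          (forall x, s 0 x = al x),
          (forall x, s len x = beta_of al x) &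
          len <= c * (num_edges o + 1)].
Proof.
exists 400 => n o _ _ Lint _ Hforb al Hal [f Hf].
exact: (main_sec Hforb Hal Hf).
Qed.
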